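(* Let $G$ be a 2-connected simple graph with maximum degree $\Delta(G)$. Then $\phi(G)\ge \lfloor \Delta(G)/2\rfloor$.
   Context: For a graph $G$, $\phi(G)$ is the maximum number of pairwise edge-disjoint cycles in $G$. *)

(* Defs.v *)
From mathcomp Require Import all_boot.
Set Implicit Arguments. Unset Strict Implicit. Unset Printing Implicit Defensive.

Definition simple_graph (T : finType) (e : rel T) : Prop :=
  symmetric e /\ irreflexive e.

Definition deg (T : finType) (e : rel T) (x : T) : nat := #|[set y | e x y]|.
Definition max_deg (T : finType) (e : rel T) : nat := \max_(x : T) deg e x.

Definition del_vertex (T : finType) (e : rel T) (v : T) : rel T :=
  [rel a b | [&& e a b, a != v & b != v]].

Definition connected_graph (T : finType) (e : rel T) : Prop :=
  forall x y : T, connect e x y.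

Definition two_connected (T : finType) (e : rel T) : Prop :=
  [/\ 3 <= #|T|, connected_graph e &
      forall v x y : T, x != v -> y != v -> connect (del_vertex e v) x y].

Definition is_cycle (T : finType) (e : rel T) (c : seq T) : bool :=
  (3 <= size c) && ucycleb e c.

Definition cycle_edges (T : finType) (c : seq T) : {set {set T}} :=
  [set [set x; next c x] | x in c].

Definition edge_disjoint_cycles (T : finType) (e : rel T) (cs : seq (seq T)) : Prop :=
  all (is_cycle e) cs /\
  pairwise (fun c1 c2 => [disjoint cycle_edges c1 & cycle_edges c2]) cs.

(* phi(G) >= k : there exist k pairwise edge-disjoint cycles. *)
Definition phi_ge (T : finType) (e : rel T) (k : nat) : Prop :=
  exists cs : seq (seq T), edge_disjoint_cycles e cs /\ size cs = k.

(* Main.v *)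
Require Import Defs.
From mathcomp Require Import all_boot.
Set Implicit Arguments. Unset Strict Implicit. Unset Printing Implicit Defensive.

Section Aux.
Variables (T : finType) (e : rel T) (v : T).
Hypothesis esym : symmetric e.

Definition f2 (a b : T) : {set T} := [set a; b].
Definition pe (p : seq T) : seq {set T} := if p is x :: q then pairmap f2 x q else [::].
Definition ends (p : seq T) : seq T := [:: head v p; last v p].
Definition good (A : {set T}) (p : seq T) : bool :=
  [&& 1 < size p, uniq p, path e (head v p) (behead p) & all (mem A) p].
Definition Inv (A S : {set T}) (F : seq (seq T)) :=
  [/\ size F = #|S|./2, all (good A) F, uniq (flatten (map pe F)),
      uniq (flatten (map ends F)) & {subset flatten (map ends F) <= S}].
Definition Pr (A : {set T}) := forall S : {set T}, S \subset A -> exists F, Inv A S F.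

Lemma pe_sub p E z : E \in pe p -> z \in E -> z \in p.
Proof.
case: p => [|x r] //=. elim: r x => [|y r IH] x //=.
rewrite inE => /orP[/eqP-> | /IH H].
  by rewrite /f2 !inE => /orP[]->; rewrite ?orbT.
by move=> /H zy; rewrite inE zy orbT.
Qed.

Lemma ends_in p a : 0 < size p -> a \in ends p -> a \in p.
Proof.
case: p => [|x r] //= _ /[!inE] /orP[]/eqP->; [exact: mem_head | exact: (mem_last x r)].
Qed.

Lemma flat_pe (A : {set T}) F E z : all (good A) F -> E \in flatten (map pe F) -> z \in E -> z \in A.
Proof.
move=> /allP gF /flattenP [s /mapP [p pF ->] Ep] zE.
have := pe_sub Ep zE. case/and4P: (gF p pF) => _ _ _ /allP H. exact: H.
Qed.

Lemma flat_ends (A : {set T}) F a : all (good A) F -> a \in flatten (map ends F) -> a \in A.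
Proof.
move=> /allP gF /flattenP [s /mapP [p pF ->] Ep].
case/and4P: (gF p pF) => sp _ _ /allP H. apply: H. apply: ends_in Ep.
exact: ltnW.
Qed.

Lemma good_mono (A B : {set T}) p : A \subset B -> good A p -> good B p.
Proof.
move=> AB /and4P[h1 h2 h3 /allP h4]; rewrite /good h1 h2 h3 /=.
apply/allP => x xp. exact: (subsetP AB _ (h4 x xp)).
Qed.

Lemma ext (A : {set T}) q a w : good A q -> a \in ends q -> w \notin A -> e a w ->
 exists q' o, [/\ good (w |: A) q', perm_eq (pe q') (f2 w a :: pe q),
   perm_eq (ends q) [:: a; o] & perm_eq (ends q') [:: w; o]].
Proof.
case: q => [|x r] //.
move=> gq aq wA eaw; have := gq; case/and4P => h1 h2 h3 /allP h4'.
have h4 : forall y, y \in x :: r -> y \in A by [].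
have wq : w \notin x :: r by apply/negP => /h4 /= wA'; rewrite wA' in wA.
move: aq eaw; rewrite /ends /= !inE => /orP[]/eqP -> eaw.
  exists (w :: x :: r), (last x r); split => //.
  rewrite /good /= wq /=; move: h2 h3 => /= -> ->; rewrite esym eaw setU11 /=.
  rewrite !inE (h4 x (mem_head x r)) orbT /=.
  by apply/allP => y yr; rewrite !inE h4 ?orbT // inE yr orbT.
exists (rcons (x :: r) w), x; split.
- rewrite /good size_rcons ltnS (ltnW h1) rcons_uniq wq h2 /= rcons_path h3 eaw /=.
  rewrite all_rcons !inE (h4 x (mem_head x r)) orbT eqxx /=.
  by apply/allP => y yr; rewrite !inE h4 ?orbT // inE yr orbT.
- rewrite /= -cats1 pairmap_cat /=.
  have -> : f2 (last x r) w = f2 w (last x r) by rewrite /f2 setUC.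
  by rewrite perm_catC.
- by rewrite (perm_catC [:: x] [:: last x r]).
- by rewrite /= last_rcons (perm_catC [:: x] [:: w]).
Qed.


Lemma step (A : {set T}) a w : Pr A -> a \in A -> w \notin A -> e a w -> Pr (w |: A).
Proof.
move=> PA aA wA eaw S SwA.
have aw : a != w by apply/eqP => eaw'; rewrite -eaw' aA in wA.
have Ssub : forall x, x \in S -> x = w \/ x \in A.
  move=> x xS; move: (subsetP SwA x xS); rewrite !inE => /orP[/eqP->|->]; by [left|right].
case: (boolP (w \in S)) => wS; last first.
  have SA : S \subset A.
    apply/subsetP => x xS; case: (Ssub x xS) => // xw; by rewrite -xw xS in wS.
  case: (PA S SA) => F [h1 h2 h3 h4 h5]; exists F; split => //.
  apply/allP => p pF; apply: (good_mono (subsetUr [set w] A)).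
  exact: (allP h2).
case: (boolP (a \in S)) => aS.
  pose S' := S :\ w :\ a.
  have S'A : S' \subset A.
    apply/subsetP => x; rewrite !inE => /and3P[xa xw xS].
    by case: (Ssub x xS) => // xw'; rewrite xw' eqxx in xw.
  have cS : #|S| = #|S'|.+2.
    rewrite (cardsD1 w S) wS (cardsD1 a (S :\ w)) !inE aw aS.
    by rewrite add1n add1n.
  case: (PA S' S'A) => F [h1 h2 h3 h4 h5].
  have eS' : forall x, x \in flatten (map ends F) -> [&& x != a, x != w & x \in S].
    by move=> x /h5; rewrite !inE.
  exists ([:: w; a] :: F); split.
  - by rewrite /= h1 cS.
  - rewrite /=; apply/andP; split.
      rewrite /good /= !inE eq_sym (negbTE aw) (esym) eaw eqxx aA orbT /=; first done.
    apply/allP => p pF; apply: (good_mono (subsetUr [set w] A)).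
    exact: (allP h2).
  - rewrite /= h3 andbT; apply/negP => /(flat_pe h2) H.
    by move: (H w (set21 w a)) => wA'; rewrite wA' in wA.
  - rewrite /= h4 andbT inE negb_or eq_sym aw /=.
    apply/andP; split; apply/negP => /eS' /and3P[H1 H2 _].
      by rewrite eqxx in H2.
    by rewrite eqxx in H1.
  - move=> x; rewrite /= !inE => /orP[/eqP->//|/orP[/eqP->//|/eS' /and3P[] //]].
pose S' := a |: (S :\ w).
have S'A : S' \subset A.
  apply/subsetP => x; rewrite !inE => /orP[/eqP->//|/andP[xw xS]].
  by case: (Ssub x xS) => // xw'; rewrite xw' eqxx in xw.
have cS : #|S'| = #|S|.
  rewrite cardsU1 !inE (negbTE aS) andbF (cardsD1 w S) wS.
  by [].
case: (PA S' S'A) => F [h1 h2 h3 h4 h5].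
case: (boolP (a \in flatten (map ends F))) => aF; last first.
  exists F; split => //.
  - by rewrite h1 cS.
  - apply/allP => p pF; apply: (good_mono (subsetUr [set w] A)).
    exact: (allP h2).
  - move=> x xF; move: (h5 x xF); rewrite !inE => /orP[/eqP xa|/andP[//]].
    by rewrite -xa xF in aF.
case/flattenP: aF => s /mapP [q qF ->] aq.
have gq : good A q by exact: (allP h2).
case: (ext gq aq wA eaw) => q' [o [g' pq' pe1 pe2]].
set G := rem q F.
have pF : perm_eq F (q :: G) by exact: perm_to_rem.
have pE : perm_eq (flatten (map pe F)) (pe q ++ flatten (map pe G)).
  by have := perm_flatten (perm_map pe pF).
have pN : perm_eq (flatten (map ends F)) (a :: o :: flatten (map ends G)).
  have := perm_flatten (perm_map ends pF); rewrite /= => H.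
  apply: (perm_trans H); exact: (perm_cat pe1 (perm_refl _)).
exists (q' :: G); split.
- by rewrite /= -cS -h1 (perm_size pF).
- rewrite /= g' /=; apply/allP => p pG; apply: (good_mono (subsetUr [set w] A)).
  apply: (allP h2); exact: (mem_rem pG).
- rewrite /= (perm_uniq (perm_cat pq' (perm_refl _))) /=.
  rewrite -(perm_uniq pE) h3 andbT.
  apply/negP; rewrite -(perm_mem pE) => /(flat_pe h2) H.
  by move: (H w (set21 w a)) => wA'; rewrite wA' in wA.
- have := h4; rewrite (perm_uniq pN) /= inE negb_or => /andP[/andP[ao anG] /andP[oG uG]].
  change (uniq (ends q' ++ flatten (map ends G))).
  rewrite (perm_uniq (perm_cat pe2 (perm_refl _))) /= oG uG andbT !inE.
  have wN : forall x, x \in flatten (map ends F) -> x != w.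
    by move=> x /(flat_ends h2) xA; apply/eqP => xw; rewrite -xw xA in wA.
  have oF : o \in flatten (map ends F) by rewrite (perm_mem pN) !inE eqxx orbT.
  rewrite andbT negb_or (eq_sym w o) wN //=; apply/negP => wG.
  have : w \in flatten (map ends F) by rewrite (perm_mem pN) !inE wG !orbT.
  by move/wN; rewrite eqxx.
- move=> x; rewrite /= (perm_mem (perm_cat pe2 (perm_refl _))) !inE.
  have := h4; rewrite (perm_uniq pN) /= inE negb_or => /andP[/andP[ao anG] /andP[oG uG]].
  case/orP => [/eqP->//|/orP[/eqP xo|xG]].
    have : o \in S' by apply: h5; rewrite (perm_mem pN) !inE eqxx orbT.
    rewrite xo !inE eq_sym (negbTE ao) /= => /andP[] //.
  have : x \in S' by apply: h5; rewrite (perm_mem pN) !inE xG !orbT.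
  rewrite !inE => /orP[/eqP xa|/andP[] //].
  by rewrite -xa xG in anG.
Qed.

Lemma cross (r : rel T) (A : {set T}) x y : connect r x y -> x \in A -> y \notin A ->
  exists a b, [/\ r a b, a \in A & b \notin A].
Proof.
move/connectP => [p]; elim: p x => [|z p IH] x /=.
  by move=> _ -> ->.
case/andP => rxz pz ey xA yA; case: (boolP (z \in A)) => zA.
  exact: IH pz ey zA yA.
by exists x, z.
Qed.

Lemma grow (conn2 : forall x y, x != v -> y != v -> connect (del_vertex e v) x y) n :
  n < #|[set~ v]| -> exists A : {set T}, [/\ A \subset [set~ v], #|A| = n.+1 & Pr A].
Proof.
elim: n => [|n IH] hn.
  have : [set~ v] != set0 by rewrite -card_gt0.
  case/set0Pn => x xv; exists [set x]; split.
  - by rewrite sub1set.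
  - by rewrite cards1.
  move=> S Sx; exists [::]; split => //.
  have := subset_leq_card Sx; rewrite cards1.
  by case: #|S| => [|[|]].
have [A [Av cA PA]] := IH (ltnW hn).
have : ~~ ([set~ v] \subset A).
  by apply/negP => /subset_leq_card; rewrite cA leqNgt hn.
case/subsetPn => y yv yA.
have : A != set0 by rewrite -card_gt0 cA.
case/set0Pn => x xA.
have xv : x \in [set~ v] by apply: (subsetP Av).
have := conn2 x y; rewrite !inE in xv yv => /(_ xv yv) cxy.
have [a [b [dab aA bA]]] := cross cxy xA yA.
move: dab; rewrite /del_vertex /= => /and3P[eab av bv].
exists (b |: A); split.
- apply/subsetP => z; rewrite in_setU1 => /orP[/eqP->|/(subsetP Av)//]; by rewrite !inE.
- by rewrite cardsU1 bA cA.
exact: step PA aA bA eab.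
Qed.

Lemma cyc_char p E : 0 < size p -> E \in cycle_edges (v :: p) ->
  (exists2 a, a \in ends p & E = [set v; a]) \/ E \in pe p.
Proof.
case: p => [|x r] // _; case/imsetP => y yc ->.
rewrite next_nth yc /=.
case: eqP => [<-|/eqP nvy].
  by left; exists x; rewrite ?inE ?eqxx.
rewrite -[(if x == y then _ else _)]/(index y (x :: r)).
have yp : y \in x :: r by move: yc; rewrite inE eq_sym (negbTE nvy).
have ilt : index y (x :: r) < size (x :: r) by rewrite index_mem.
set i := index y (x :: r) in ilt *.
have yi : nth v (x :: r) i = y by exact: nth_index.
case: (ltnP i (size r)) => hi.
  right.
  rewrite -[nth v (x :: r) i.+1]/(nth v r i) -/(f2 y (nth v r i)).
  have := nth_pairmap v set0 f2 hi x; rewrite yi => <-.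
  by apply: mem_nth; rewrite size_pairmap.
left.
have ir : i = size r by move: ilt; rewrite /= ltnS => H; apply/eqP; rewrite eqn_leq H hi.
exists y.
  rewrite /ends !inE; apply/orP; right; apply/eqP.
  by rewrite -yi ir -[size r]/((size (x :: r)).-1) nth_last.
by rewrite ir nth_default // /f2 setUC.
Qed.

Lemma cyc_disj p q : 0 < size p -> 0 < size q -> v \notin p -> v \notin q ->
  (forall a, a \in ends p -> a \notin ends q) ->
  (forall E, E \in pe p -> E \notin pe q) ->
  [disjoint cycle_edges (v :: p) & cycle_edges (v :: q)].
Proof.
move=> p0 q0 vp vq dE dP.
rewrite disjoint_subset; apply/subsetP => E /(cyc_char p0) H1; rewrite inE.
apply/negP => /(cyc_char q0) H2.
case: H1 => [[a ap Ea]|Ep]; case: H2 => [[b bq Eb]|Eq].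
- have : a \in [set v; b] by rewrite -Eb Ea set22.
  rewrite !inE => /orP[/eqP av|/eqP ab].
    by move: vp; rewrite -av (ends_in p0 ap).
  by move: (dE a ap); rewrite ab bq.
- by move: (@pe_sub q E v Eq); rewrite Ea set21 (negbTE vq) => /(_ isT).
- by move: (@pe_sub p E v Ep); rewrite Eb set21 (negbTE vp) => /(_ isT).
- by move: (dP E Ep); rewrite Eq.
Qed.

Lemma good_nv (A : {set T}) p : A \subset [set~ v] -> good A p -> v \notin p.
Proof.
move=> Av /and4P[_ _ _ /allP H]; apply/negP => /H vA.
by move: (subsetP Av v vA); rewrite !inE eqxx.
Qed.

Lemma uniq_catN (X : eqType) (s1 s2 : seq X) x : uniq (s1 ++ s2) -> x \in s1 -> x \notin s2.
Proof.
rewrite cat_uniq => /and3P[_ /hasPn H _] xs1; apply/negP => xs2.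
by move: (H x xs2) => /negP; apply.
Qed.

Lemma fam_pw (A : {set T}) F : A \subset [set~ v] -> all (good A) F ->
  uniq (flatten (map pe F)) -> uniq (flatten (map ends F)) ->
  pairwise (fun c1 c2 => [disjoint cycle_edges c1 & cycle_edges c2]) (map (cons v) F).
Proof.
move=> Av; elim: F => [|p F IH] // /andP[gp gF] U1 U2.
have U1' : uniq (pe p ++ flatten (map pe F)) := U1.
have U2' : uniq (ends p ++ flatten (map ends F)) := U2.
change (pairwise (fun c1 c2 => [disjoint cycle_edges c1 & cycle_edges c2])
   ((v :: p) :: map (cons v) F)).
rewrite pairwise_cons.
have u2 : uniq (flatten (map pe F)) by move: U1'; rewrite cat_uniq => /and3P[].
have u4 : uniq (flatten (map ends F)) by move: U2'; rewrite cat_uniq => /and3P[].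
rewrite IH // andbT; apply/allP => c /mapP [q qF ->].
have gq : good A q by exact: (allP gF).
have sz : forall s, good A s -> 0 < size s by move=> s /and4P[h _ _ _]; exact: ltnW.
apply: cyc_disj; rewrite ?sz ?(good_nv Av) //.
  move=> a ap; have := uniq_catN U2' ap; apply: contra => aq.
  by apply/flattenP; exists (ends q) => //; apply: map_f.
move=> E Ep; have := uniq_catN U1' Ep; apply: contra => Eq.
by apply/flattenP; exists (pe q) => //; apply: map_f.
Qed.

End Aux.

Theorem corollary2p2 (T : finType) (e : rel T) :
  simple_graph e -> two_connected e -> phi_ge e (max_deg e)./2.
Proof.
move=> [esym eirr] [c3 conn two].
have T0 : 0 < #|T| by apply: leq_trans c3.
have [v Hv] := eq_bigmax (deg e) T0.
have nv0 : 0 < #|[set~ v]| by rewrite cardsC1; case: #|T| c3 => [|[|]].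
have hlt : #|[set~ v]|.-1 < #|[set~ v]| by rewrite prednK.
have [A [Av cA PA]] := grow esym (two v) hlt.
have AE : A = [set~ v].
  by apply/eqP; rewrite eqEcard Av /= cA prednK.
have SA : [set y | e v y] \subset A.
  rewrite AE; apply/subsetP => y; rewrite !inE; apply: contraL => /eqP <-.
  by rewrite eirr.
case: (PA _ SA) => F [h1 h2 h3 h4 h5].
exists (map (cons v) F); split; last by rewrite size_map h1 /max_deg Hv.
split; last exact: (fam_pw Av h2 h3 h4).
apply/allP => c /mapP [p pF ->].
have gp : good e v A p by exact: (allP h2).
have vp := good_nv Av gp.
have inF : forall a, a \in ends v p -> e v a.
  move=> a aE; have : a \in [set y | e v y].
    by apply: h5; apply/flattenP; exists (ends v p) => //; apply: map_f.
  by rewrite inE.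
move: gp vp inF; case: p pF => [|x r] // pF /and4P[sp up pp ap] vp inF.
rewrite /is_cycle /ucycleb.
have ex : e v x by apply: inF; rewrite !inE eqxx.
have el : e v (last x r) by apply: inF; rewrite /ends !inE eqxx orbT.
apply/and3P; split.
- exact: sp.
- rewrite /= ex rcons_path; move: pp => /= ->; by rewrite (esym (last x r) v) el.
- by rewrite cons_uniq vp up.
Qed.
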